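(* Let $\mathsf X$ be a subcategory of the cluster tube $\mathsf C_n$ with corresponding $n$-periodic collection of arcs $\mathcal X$, and suppose $\mathsf X={}^{\perp}(\mathsf X^{\perp})$ (equivalently, $\mathcal X$ is an $n$-periodic Ptolemy diagram). Then exactly one of the following holds: (i) $\mathsf X$ has only finitely many indecomposable objects (up to isomorphism), all of level $\le n-1$, and $\mathsf X^{\perp}$ has infinitely many indecomposable objects; (ii) $\mathsf X$ has infinitely many indecomposable objects, and $\mathsf X^{\perp}$ has only finitely many indecomposable objects, all of level $\le n-1$.
   Context: Fix a field $K$ and an integer $n\ge 1$. The cluster tube $\mathsf C_n=D^b(\mathsf T_n)/(\tau^{-1}\circ\Sigma)$ is the cluster category of the tube category $\mathsf T_n$ of nilpotent finite-dimensional representations of the cyclically oriented cyclic quiver with $n$ vertices; it is a Krull–Schmidt, Hom-finite, 2-Calabi–Yau triangulated category with $\Sigma=\tau$. An arc of the $\infty$-gon is a pair $(i,j)$ of integers with $j-i\ge 2$; its length is $j-i$. Isoclasses of indecomposable objects of $\mathsf C_n$ correspond bijectively to classes $[(i,j)]=\{(i+rn,j+rn):r\in\mathbb Z\}$ of arcs, with $\Sigma[(i,j)]=\tau[(i,j)]=[(i-1,j-1)]$; the level of $[(i,j)]$ is $j-i-1$. Subcategories are full and closed under isomorphisms, finite direct sums and direct summands, and correspond to $n$-periodic collections of arcs (the arcs representing their indecomposables). $\mathsf X^{\perp}=\{c:\operatorname{Hom}(x,c)=0\ \forall x\in\mathsf X\}$, ${}^{\perp}\mathsf Y=\{c:\operatorname{Hom}(c,y)=0\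 \forall y\in\mathsf Y\}$. Two arcs $(i,j),(k,l)$ cross if $i<k<j<l$ or $k<i<l<j$. A Ptolemy diagram of the $\infty$-gon is a collection $\mathcal X$ of arcs such that whenever $(i,j),(r,s)\in\mathcal X$ cross with $i<r$, each of $(i,r),(i,s),(r,j),(j,s)$ which is an arc lies in $\mathcal X$. *)

(* Defs.v *)
(* arcs of the infinity-gon are pairs of integers. *)
From Stdlib Require Import ZArith List.
Open Scope Z_scope.

Definition arc : Type := (Z * Z)%type.

Definition is_arc (a : arc) : Prop := snd a - fst a >= 2.

Definition level (a : arc) : Z := snd a - fst a - 1.

Definition same_class (n : Z) (a b : arc) : Prop :=
  exists r : Z, fst b = fst a + r * n /\ snd b = snd a + r * n.

Definition cross (a b : arc) : Prop :=
  (fst a < fst b /\ fst b < snd a /\ snd a < snd b) \/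
  (fst b < fst a /\ fst a < snd b /\ snd b < snd a).

(* Ext^1_{C_n}([a],[b]) <> 0 : some representatives of the classes cross *)
Definition ext_nz (n : Z) (a b : arc) : Prop :=
  exists a' b', same_class n a a' /\ same_class n b b' /\ cross a' b'.

(* Hom_{C_n}([a],[c]) = Ext^1([a], Sigma^{-1}[c]) (2-Calabi-Yau),
   with Sigma^{-1}[(k,l)] = [(k+1,l+1)]. *)
Definition hom_nz (n : Z) (a c : arc) : Prop :=
  ext_nz n a (fst c + 1, snd c + 1).

(* A subcategory of C_n = an n-periodic collection of arcs *)
Definition subcat (n : Z) (X : arc -> Prop) : Prop :=
  (forall a, X a -> is_arc a) /\
  (forall a b, same_class n a b -> (X a <-> X b)).

(* X^perp and ^perp Y (on indecomposables) *)
Definition right_perp (n : Z) (X : arc -> Prop) (c : arc) : Prop :=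
  is_arc c /\ forall x, X x -> ~ hom_nz n x c.

Definition left_perp (n : Z) (Y : arc -> Prop) (c : arc) : Prop :=
  is_arc c /\ forall y, Y y -> ~ hom_nz n c y.

(* only finitely many indecomposables up to isomorphism, i.e. finitely many
   classes of arcs *)
Definition finitely_many_classes (n : Z) (X : arc -> Prop) : Prop :=
  exists L : list arc, forall a, X a -> exists b, In b L /\ same_class n b a.

(* Main.v *)
Require Import Defs.
From Stdlib Require Import ZArith List Lia Classical.
Open Scope Z_scope.

Lemma shift_into (n k x : Z) : 1 <= n -> exists r, k - n < x + r*n <= k.
Proof.
  intros hn. exists ((k - x)/n).
  pose proof (Z.mod_pos_bound (k-x) n ltac:(lia)).
  pose proof (Z.div_mod (k-x) n ltac:(lia)). lia.
Qed.

Lemma hom_unfold n a c : hom_nz n a c <->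
  exists r1 r2, cross (fst a + r1*n, snd a + r1*n) (fst c + 1 + r2*n, snd c + 1 + r2*n).
Proof.
  unfold hom_nz, ext_nz, same_class. split.
  - intros [[a1 a2] [[b1 b2] [[r1 [H1 H2]] [[r2 [H3 H4]] Hc]]]]; simpl in *; subst.
    exists r1, r2. exact Hc.
  - intros [r1 [r2 Hc]]. eexists; eexists; split; [|split; [|exact Hc]].
    + exists r1; simpl; lia.
    + exists r2; simpl; lia.
Qed.

Lemma fold_max_in (L : list arc) b : In b L ->
  snd b - fst b <= fold_right (fun b acc => Z.max (snd b - fst b) acc) 0 L.
Proof.
  induction L as [|b0 L IH]; simpl; [tauto|].
  intros [<-|Hb]; [lia|]. specialize (IH Hb). lia.
Qed.

Lemma len_bound_of_fin (n : Z) (P : arc -> Prop) :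
  finitely_many_classes n P -> exists B, forall a, P a -> snd a - fst a <= B.
Proof.
  intros [L HL].
  exists (fold_right (fun b acc => Z.max (snd b - fst b) acc) 0 L).
  intros a Ha. destruct (HL a Ha) as [b [Hb [r [H1 H2]]]].
  pose proof (fold_max_in L b Hb). lia.
Qed.

Lemma fin_of_short (n : Z) (P : arc -> Prop) : 1 <= n ->
  (forall a, P a -> 2 <= snd a - fst a <= n) -> finitely_many_classes n P.
Proof.
  intros hn HP.
  exists (flat_map (fun p => map (fun A => (Z.of_nat p, Z.of_nat p + Z.of_nat A))
            (seq 0 (Z.to_nat n + 1))) (seq 0 (Z.to_nat n))).
  intros [i j] Ha. specialize (HP _ Ha). simpl in HP.
  pose proof (Z.mod_pos_bound i n ltac:(lia)).
  pose proof (Z.div_mod i n ltac:(lia)).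
  exists (i mod n, i mod n + (j - i)). split.
  - apply in_flat_map. exists (Z.to_nat (i mod n)). split.
    + apply in_seq. lia.
    + apply in_map_iff. exists (Z.to_nat (j - i)). split.
      * rewrite !Z2Nat.id by lia. reflexivity.
      * apply in_seq. lia.
  - exists (i / n). simpl. lia.
Qed.

Lemma long_hom n p A k M : 1 <= n -> n+1 <= A -> n+1 <= M -> hom_nz n (p,p+A) (k,k+M).
Proof.
  intros hn hA hM. apply hom_unfold. unfold cross; simpl.
  destruct (Z_le_gt_dec A M).
  - destruct (shift_into n k p hn) as [r Hr]. exists r, 0. left; lia.
  - destruct (shift_into n (k+M) p hn) as [r Hr]. exists r, 0. right; lia.
Qed.

Lemma rp_shift n X s l r : right_perp n X (s,l) -> right_perp n X (s + r*n, l + r*n).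
Proof.
  intros [Ha Hno]. split; [unfold is_arc in *; simpl in *; lia|].
  intros x Hx Hh. apply (Hno x Hx). rewrite hom_unfold in *.
  destruct Hh as [r1 [r2 Hc]]. exists r1, (r2 + r). unfold cross in *; simpl in *. lia.
Qed.

Theorem mainTheorem4 (n : Z) (hn : 1 <= n) (X : arc -> Prop)
  (hX : subcat n X)
  (hperp : forall c, X c <-> left_perp n (right_perp n X) c) :
  let case_i :=
    finitely_many_classes n X /\ (forall a, X a -> level a <= n - 1) /\
    ~ finitely_many_classes n (right_perp n X) in
  let case_ii :=
    ~ finitely_many_classes n X /\ finitely_many_classes n (right_perp n X) /\
    (forall a, right_perp n X a -> level a <= n - 1) in
  (case_i /\ ~ case_ii) \/ (case_ii /\ ~ case_i).
Proof.
  intros case_i case_ii.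
  destruct hX as [hXarc hXcl].
  assert (hsh : forall p j r, X (p,j) -> X (p + r*n, j + r*n)).
  { intros p j r Ha. apply (proj1 (hXcl (p,j) (p + r*n, j + r*n) ltac:(exists r; simpl; lia))). exact Ha. }
  destruct (classic (exists p j, X (p,j) /\ n+1 <= j - p)) as [[p [j [Ha0 Hlen]]]|Hshort].
  -
    assert (Hps : forall c, right_perp n X c -> 2 <= snd c - fst c <= n).
    { intros [k l] [Harc Hno]. unfold is_arc in Harc; simpl in *.
      destruct (Z_le_gt_dec (l-k) n); [lia|].
      exfalso. apply (Hno _ Ha0).
      pose proof (long_hom n p (j-p) k (l-k) hn ltac:(lia) ltac:(lia)) as H.
      replace (p + (j-p)) with j in H by lia. replace (k + (l-k)) with l in H by lia.
      exact H. }
    assert (Hlong : forall k, 0 <= k -> X (p, j + k*n)).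
    { intros k hk. apply hperp. split.
      - unfold is_arc; simpl. nia.
      - intros [s l] Hy Hh. pose proof (Hps _ Hy) as Hyl. simpl in Hyl.
        apply hperp in Ha0. destruct Ha0 as [_ Hnoa]. apply (Hnoa _ Hy).
        rewrite hom_unfold in *. destruct Hh as [r1 [r2 Hc]].
        unfold cross in *; simpl in *.
        destruct Hc as [Hc|Hc].
        + exists (r1 + k), r2. left. nia.
        + exists r1, r2. right. nia. }
    right. split.
    + split; [|split].
      * intros Hfin. destruct (len_bound_of_fin _ _ Hfin) as [B HB].
        specialize (HB _ (Hlong (Z.abs B) ltac:(lia))). simpl in HB. nia.
      * apply fin_of_short; auto.
      * intros a Ha. specialize (Hps a Ha). unfold level. lia.
    + intros [Hfin _]. destruct (len_bound_of_fin _ _ Hfin) as [B HB].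
      specialize (HB _ (Hlong (Z.abs B) ltac:(lia))). simpl in HB. nia.
  - assert (Hs : forall a, X a -> 2 <= snd a - fst a <= n).
    { intros [p j] Ha. pose proof (hXarc _ Ha) as Harc. unfold is_arc in Harc; simpl in *.
      destruct (Z_le_gt_dec (j-p) n); [lia|]. exfalso. apply Hshort. exists p, j. split; auto; lia. }
    left. split.
    2:{ intros [H _]. apply H. apply fin_of_short; auto. }
    split; [apply fin_of_short; auto|split].
    { intros a Ha. specialize (Hs a Ha). unfold level. lia. }
    intros Hfin. destruct (len_bound_of_fin _ _ Hfin) as [Bd HBd].
    set (L := (Z.abs Bd + 2) * n).
    assert (HL1 : Bd < L) by (unfold L; nia).
    assert (HL2 : n < L) by (unfold L; nia).
    assert (CovX : forall q, exists p j, X (p,j) /\ p <= q <= j - 2).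
    { intros q. apply NNPP. intros Hne.
      assert (Hr : right_perp n X (q, q+L)).
      { split; [unfold is_arc; simpl; lia|].
        intros [p j] Hx Hh. apply Hne. rewrite hom_unfold in Hh.
        destruct Hh as [r1 [r2 Hc]]. unfold cross in Hc; simpl in Hc.
        destruct Hc as [Hc|Hc].
        - exists (p + (r1 - r2)*n), (j + (r1-r2)*n). split; [apply hsh; auto|lia].
        - exists (p + (r1 - r2 - (Z.abs Bd + 2))*n), (j + (r1 - r2 - (Z.abs Bd + 2))*n).
          split; [apply hsh; auto|]. unfold L in *. lia. }
      specialize (HBd _ Hr). simpl in HBd. lia. }
    assert (CovY : forall q, exists s l, right_perp n X (s,l) /\ s + 2 <= q <= l).
    { intros q. apply NNPP. intros Hne.
      assert (Hr : X (q, q+L)).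
      { apply hperp. split; [unfold is_arc; simpl; lia|].
        intros [s l] Hy Hh. apply Hne. rewrite hom_unfold in Hh.
        destruct Hh as [r1 [r2 Hc]]. unfold cross in Hc; simpl in Hc.
        destruct Hc as [Hc|Hc].
        - exists (s + (r2 - r1 - (Z.abs Bd + 2))*n), (l + (r2 - r1 - (Z.abs Bd + 2))*n).
          split; [apply rp_shift; auto|]. unfold L in *. lia.
        - exists (s + (r2 - r1)*n), (l + (r2-r1)*n). split; [apply rp_shift; auto|lia]. }
      specialize (Hs _ Hr). simpl in Hs. lia. }
    assert (Grow : forall k : nat, exists p j, X (p,j) /\ Z.of_nat k <= j - p).
    { induction k as [|k IH].
      - destruct (CovX 0) as [p [j [Hx Hpj]]]. exists p, j. split; auto; lia.
      - destruct IH as [p [j [Hx Hpj]]].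
        destruct (CovY j) as [s [l [Hy Hsl]]].
        destruct Hy as [Hya Hno].
        assert (s + 1 <= p).
        { destruct (Z_le_gt_dec (s+1) p); auto. exfalso. apply (Hno _ Hx).
          apply hom_unfold. exists 0, 0. unfold cross; simpl. left; lia. }
        destruct (CovX l) as [p' [j' [Hx' Hpj']]].
        assert (p' <= s + 1).
        { destruct (Z_le_gt_dec p' (s+1)); auto. exfalso. apply (Hno _ Hx').
          apply hom_unfold. exists 0, 0. unfold cross; simpl. right; lia. }
        exists p', j'. split; auto. lia. }
    destruct (Grow (Z.to_nat (n+1))) as [p [j [Hx Hpj]]].
    specialize (Hs _ Hx). simpl in Hs. lia.
Qed.
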